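(* In the Byblos protocol described in the context, if a transaction $T$ is in $\mathit{confirmed}[t]$ at one correct server and in $\mathit{confirmed}[t']$ at another correct server, then $t = t'$.
   Context: Byblos protocol. There are $n=4f+1$ servers, at most $f$ of which are Byzantine; the rest are correct. Clients are not Byzantine (they may crash). Messages between correct parties are eventually delivered, channels are FIFO, senders are authenticated, and every client message (including when forwarded by a server) is signed by the client and cannot be forged. Each correct server keeps an integer $\mathit{clock}$ (initially $0$), sets $\mathit{proposed}[s]$ of pairs $(T,k)$ for each server $s$, and maps $\mathit{confirmed}[t]$, $\mathit{pending}[t]$ from integer timestamps to sets of transactions (initially empty). Client with transaction $T$: broadcasts $\mathrm{Propose}(T)$ to all servers; waits for $\mathrm{ProposeAck}(T,\cdot)$ from at least $n-f$ servers; letting $\mathit{timestamp}[s]$ be the value received from server $s$ ($0$ if none), sets $\hat t$ to $1$ plus the $(f+1)$-st largest value of $\mathit{timestamp}[\cdot]$; then broadcasts $\mathrm{Confirm}(T,\hat t)$ once. Correct server: on $\mathrm{Propose}(T)$ from a client, adds $(T,\mathit{clock})$ to $\mathit{proposed}[\mathit{self}]$, sends $\mathrm{Proposed}(T,\mathit{clock})$ to all servers and $\mathrm{ProposeAck}(T,\mathit{clock})$ to the client; on $\mathrm{Proposed}(T,k)$ from server $s$, adds $(T,k)$ to $\mathit{proposed}[s]$; on $\mathrm{Confirm}(T,\hat t)$ received from a client or forwarded by a server, sets $\mathit{clock}:=\max(\mathit{clock},\hat t)$, adds $T$ to $\mathit{confirmed}[\hat t]$, and forwards $\mathrm{Confirm}(T,\hat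 t)$ to all servers if not previously done. *)

(* Defs.v *)
From HB Require Import structures.
From mathcomp Require Import all_boot.

Set Implicit Arguments.
Unset Strict Implicit.
Unset Printing Implicit Defensive.

Section Byblos.

Variable f : nat.
Definition nsrv := (4 * f).+1.

Variables (Client Tx : eqType) (owner : Tx -> Client).

Variable Byz : {set 'I_nsrv}.

Inductive msg :=
  | Propose of Tx
  | ProposeAck of Tx & nat
  | Proposed of Tx & nat
  | Confirm of Tx & nat.

Definition party := ('I_nsrv + Client)%type.

Definition is_server (p : party) : bool := if p is inl _ then true else false.

Record sstate := SState {
  clock : nat;
  proposed : 'I_nsrv -> seq (Tx * nat);
  confirmed : nat -> seq Tx;
  forwarded : seq (Tx * nat)  (* Confirm messages already forwarded *)
}.

(* local state of the client, for a given transaction *)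
Record cstate := CState {
  c_proposed : bool;
  c_acks : 'I_nsrv -> option nat;    (* ProposeAck value received from s *)
  c_confirm : option nat             (* Some t: Confirm(T,t) has been broadcast *)
}.

(* global state: server states, client states, FIFO channels p -> q *)
Record gstate := GState {
  srv : 'I_nsrv -> sstate;
  cli : Tx -> cstate;
  chan : party -> party -> seq msg
}.

Definition upd (A : eqType) (B : Type) (g : A -> B) (a : A) (b : B) : A -> B :=
  fun x => if x == a then b else g x.

Definition send (ch : party -> party -> seq msg) (p q : party) (m : msg) :=
  fun p' q' => if (p' == p) && (q' == q) then rcons (ch p' q') m else ch p' q'.

Definition bcast (ch : party -> party -> seq msg) (p : party) (m : msg) :=
  fun p' q' => if (p' == p) && is_server q' then rcons (ch p' q') m else ch p' q'.

Definition handle_srv (i : 'I_nsrv) (s : sstate) (p : party) (m : msg)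
    (ch : party -> party -> seq msg) : sstate * (party -> party -> seq msg) :=
  match m with
  | Propose T =>
      if p is inr _ then
        (SState (clock s) (upd (proposed s) i ((T, clock s) :: proposed s i))
                (confirmed s) (forwarded s),
         send (bcast ch (inl i) (Proposed T (clock s))) (inl i) p
              (ProposeAck T (clock s)))
      else (s, ch)
  | Proposed T k =>
      if p is inl s' then
        (SState (clock s) (upd (proposed s) s' ((T, k) :: proposed s s'))
                (confirmed s) (forwarded s), ch)
      else (s, ch)
  | ProposeAck _ _ => (s, ch)
  | Confirm T t =>
      let done := (T, t) \in forwarded s in
      (SState (maxn (clock s) t) (proposed s)
              (upd (confirmed s) t (T :: confirmed s t))
              (if done then forwarded s else (T, t) :: forwarded s),
       if done then ch else bcast ch (inl i) (Confirm T t))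
  end.

Definition handle_cli (c : Client) (cs : Tx -> cstate) (p : party) (m : msg)
    : Tx -> cstate :=
  match m, p with
  | ProposeAck T k, inl s =>
      if (owner T == c) && c_proposed (cs T) && (c_acks (cs T) s == None) then
        upd cs T (CState (c_proposed (cs T)) (upd (c_acks (cs T)) s (Some k))
                         (c_confirm (cs T)))
      else cs
  | _, _ => cs
  end.

Definition deliver (st : gstate) (p q : party) : gstate :=
  match chan st p q with
  | [::] => st
  | m :: rest =>
      let ch := fun p' q' => if (p' == p) && (q' == q) then rest
                             else chan st p' q' in
      match q with
      | inl i =>
          if i \in Byz then GState (srv st) (cli st) ch
          else let r := handle_srv i (srv st i) p m ch in
               GState (upd (srv st) i r.1) (cli st) r.2
      | inr c => GState (srv st) (handle_cli c (cli st) p m) ch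
      end
  end.

(* timestamp[s], 0 if none *)
Definition tstamp (a : 'I_nsrv -> option nat) (s : 'I_nsrv) : nat := odflt 0 (a s).

(* 1 + the (f+1)-st largest value of timestamp[.] *)
Definition that (a : 'I_nsrv -> option nat) : nat :=
  (nth 0 (sort geq [seq tstamp a s | s <- enum 'I_nsrv]) f).+1.

(* client-signed messages that exist (Byzantine servers cannot forge) *)
Definition signed (cs : Tx -> cstate) (m : msg) : bool :=
  match m with
  | Propose T => c_proposed (cs T)
  | Confirm T t => c_confirm (cs T) == Some t
  | _ => true
  end.

Inductive step : gstate -> gstate -> Prop :=
  | StDeliver st p q : chan st p q <> [::] -> step st (deliver st p q)
  | StPropose st T : ~~ c_proposed (cli st T) ->
      step st (GState (srv st)
                 (upd (cli st) T (CState true (c_acks (cli st T)) (c_confirm (cli st T))))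
                 (bcast (chan st) (inr (owner T)) (Propose T)))
  | StConfirm st T : c_proposed (cli st T) -> c_confirm (cli st T) = None ->
      nsrv - f <= #|[set s | c_acks (cli st T) s != None]| ->
      step st (GState (srv st)
                 (upd (cli st) T (CState true (c_acks (cli st T))
                                         (Some (that (c_acks (cli st T))))))
                 (bcast (chan st) (inr (owner T))
                        (Confirm T (that (c_acks (cli st T))))))
  | StByz st b q m : b \in Byz -> signed (cli st) m ->
      step st (GState (srv st) (cli st) (send (chan st) (inl b) q m)).

Definition init_state : gstate :=
  GState (fun _ => SState 0 (fun _ => [::]) (fun _ => [::]) [::])
         (fun _ => CState false (fun _ => None) None)
         (fun _ _ => [::]).

Inductive reachable : gstate -> Prop :=
  | Reach0 : reachable init_state
  | ReachS st st' : reachable st -> step st st' -> reachable st'.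

End Byblos.

(* Main.v *)
Require Import Defs.
From HB Require Import structures.
From mathcomp Require Import all_boot.

Set Implicit Arguments.
Unset Strict Implicit.
Unset Printing Implicit Defensive.

Section Proof.
Variables (f : nat) (Client Tx : eqType) (owner : Tx -> Client)
    (Byz : {set 'I_(nsrv f)}).

Definition okb (cs : Tx -> cstate f) (m : msg Tx) : bool :=
  if m is Confirm T t then c_confirm (cs T) == Some t else true.

Definition Inv (st : gstate f Client Tx) : Prop :=
  (forall p q, all (okb (cli st)) (chan st p q)) /\
  (forall i T t, T \in confirmed (srv st i) t -> c_confirm (cli st T) == Some t).

Definition mono (cs cs' : Tx -> cstate f) :=
  forall T t, c_confirm (cs T) = Some t -> c_confirm (cs' T) = Some t.

Lemma okb_mono cs cs' m : mono cs cs' -> okb cs m -> okb cs' m.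
Proof. by move=> H; case: m => //= T t /eqP /H ->. Qed.

Lemma all_send (P : pred (msg Tx)) (ch : party f Client -> party f Client -> seq (msg Tx)) p q m p' q' :
  (forall a b, all P (ch a b)) -> P m -> all P (send ch p q m p' q').
Proof. move=> H Hm; rewrite /send; case: ifP => _; by rewrite ?all_rcons ?Hm ?H. Qed.

Lemma all_bcast (P : pred (msg Tx)) (ch : party f Client -> party f Client -> seq (msg Tx)) p m p' q' :
  (forall a b, all P (ch a b)) -> P m -> all P (bcast ch p m p' q').
Proof. move=> H Hm; rewrite /bcast; case: ifP => _; by rewrite ?all_rcons ?Hm ?H. Qed.

Lemma handle_cli_mono c cs p m : mono cs (handle_cli owner c cs p m).
Proof.
move=> T t; case: m => //= T0 k; case: p => //= s; case: ifP => // _.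
by rewrite /upd; case: eqP => // ->.
Qed.

Lemma Inv_step st st' : step owner Byz st st' -> Inv st -> Inv st'.
Proof.
case=> {st st'} [st p q Hne|st T _|st T _ Hnone _|st b q m _ Hs] [Hch Hsrv].
- rewrite /deliver.
  case Heq: (chan st p q) => [|m rest]; first by split.
  have Hm : okb (cli st) m by have := Hch p q; rewrite Heq => /andP[].
  set ch := fun p' q' => _.
  have Hc : forall a b, all (okb (cli st)) (ch a b).
    move=> a b; rewrite /ch; case: ifP => // _.
    by have := Hch p q; rewrite Heq => /andP[].
  clear Hne Heq; case: q ch Hc => [i|c] ch Hc.
  + case: ifP => _; first by split.
    split => /=.
    * case: m Hm => [T|T k|T k|T k] Hm /=.
      - case: p ch Hc => [?|?] ch Hc a b /=; [exact: Hc | apply: all_send => // a' b'; exact: all_bcast].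
      - case: p ch Hc => [?|?] ch Hc a b //=.
      - case: p ch Hc => [?|?] ch Hc a b //=.
      - by case: ifP => _ a b //; apply: all_bcast.
    * move=> i' T t; rewrite /upd; case: ifP => [_|_]; last exact: Hsrv.
      case: m Hm => [T0|T0 k|T0 k|T0 k] Hm /=.
      - by case: p ch Hc => [?|?] ch Hc /=; apply: Hsrv.
      - exact: Hsrv.
      - by case: p ch Hc => [?|?] ch Hc /=; apply: Hsrv.
      - rewrite /upd; case: (t =P k) => [->|_]; last exact: Hsrv.
        rewrite in_cons => /orP[/eqP ->|]; [exact: Hm | exact: Hsrv].
  + have HM := @handle_cli_mono c (cli st) p m.
    split => /=.
    * move=> a b; move: (Hc a b); apply: sub_all => x; exact: okb_mono HM.
    * by move=> i T t /Hsrv /eqP /HM ->.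
- have HM : mono (cli st) (upd (cli st) T
      (CState true (c_acks (cli st T)) (c_confirm (cli st T)))).
    by move=> T' t; rewrite /upd; case: eqP => // ->.
  split => /=.
  + move=> a b; apply: all_bcast => // a' b'; move: (Hch a' b'); apply: sub_all => x; exact: okb_mono HM.
  + by move=> i T' t /Hsrv /eqP /HM ->.
-   set v := that _.
  set cs' := upd _ _ _.
  have HM : mono (cli st) cs'.
    by move=> T' t; rewrite /cs' /upd; case: eqP => // -> ; rewrite Hnone.
  split => /=.
  + move=> a b; apply: all_bcast.
    * move=> a' b'; move: (Hch a' b'); apply: sub_all => x; exact: okb_mono HM.
    * by rewrite /= /cs' /upd eqxx.
  + by move=> i T' t /Hsrv /eqP /HM ->.
- split => /=; last exact: Hsrv.
  move=> a c; apply: all_send => //.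
  by case: m Hs.
Qed.

Lemma Inv_reach st : reachable owner Byz st -> Inv st.
Proof.
elim => [|s s' _ IH Hs]; last exact: Inv_step Hs IH.
by split.
Qed.

End Proof.

Theorem lemma1 (f : nat) (Client Tx : eqType) (owner : Tx -> Client)
    (Byz : {set 'I_(nsrv f)}) :
  #|Byz| <= f ->
  forall st : gstate f Client Tx,
  reachable owner Byz st ->
  forall (i j : 'I_(nsrv f)) (T : Tx) (t t' : nat),
    i \notin Byz -> j \notin Byz ->
    T \in confirmed (srv st i) t -> T \in confirmed (srv st j) t' ->
    t = t'.
Proof.
move=> _ st /Inv_reach [_ H] i j T t t' _ _ /H /eqP Hi /H /eqP.
by rewrite Hi => -[].
Qed.
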